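(* Let $(U,V)$ be a pair of random variables taking values in finite sets $\mathcal{U}\times\mathcal{V}$ with joint probability mass function $p(u,v)$. Let $\mathcal{U}_1,\dots,\mathcal{U}_{\tilde N_u}$ be a partition of $\mathcal{U}$ into nonempty pairwise disjoint blocks and $\mathcal{V}_1,\dots,\mathcal{V}_{\tilde N_v}$ a partition of $\mathcal{V}$ into nonempty pairwise disjoint blocks (the synonymous mappings), with associated semantic variables $\tilde U,\tilde V$. Then (chain rule of semantic entropy) $$H_s(\tilde U)+H_s(\tilde V\mid U)\le H_s(\tilde U,\tilde V)\le H(U)+H_s(\tilde V\mid U)\le H(U,V).$$
   Context: For $p(\mathcal{U}_{i_s})=\sum_{u\in\mathcal{U}_{i_s}}p(u)$, the semantic entropy is $H_s(\tilde U)=-\sum_{i_s}p(\mathcal{U}_{i_s})\log p(\mathcal{U}_{i_s})$. The semantic joint entropy is $H_s(\tilde U,\tilde V)=-\sum_{i_s=1}^{\tilde N_u}\sum_{j_s=1}^{\tilde N_v}p(\mathcal{U}_{i_s}\times\mathcal{V}_{j_s})\log p(\mathcal{U}_{i_s}\times\mathcal{V}_{j_s})$, with $p(\mathcal{U}_{i_s}\times\mathcal{V}_{j_s})=\sum_{(u,v)\in\mathcal{U}_{i_s}\times\mathcal{V}_{j_s}}p(u,v)$. The semantic conditional entropy is $H_s(\tilde V\mid U)=-\sum_{u\in\mathcal{U}:p(u)>0}\sum_{j_s=1}^{\tilde N_v}p(u)\,p(\mathcal{V}_{j_s}\mid u)\log p(\mathcal{V}_{j_s}\mid u)$, with $p(\mathcal{V}_{j_s}\mid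 u)=\sum_{v\in\mathcal{V}_{j_s}}p(v\mid u)$ (the conditional synonymous mapping uses the same partition of $\mathcal{V}$ for every $u$). $H(U)$, $H(U,V)$ are Shannon entropies; logarithms are to base 2 and $0\log 0=0$. *)

(* Defs.v *)
From mathcomp Require Import all_boot all_order all_algebra.
From mathcomp Require Import all_classical all_reals exp.
Set Implicit Arguments. Unset Strict Implicit. Unset Printing Implicit Defensive.
Import Order.TTheory GRing.Theory Num.Theory.
Local Open Scope ring_scope.

Section Entropy.
Variables (R : realType) (U V : finType).

Definition log2 (x : R) : R := ln x / ln 2.

Definition plogp (x : R) : R := if x == 0 then 0 else x * log2 x.

Definition margU (p : {ffun U * V -> R}) (u : U) : R := \sum_(v : V) p (u, v).

Definition HU (p : {ffun U * V -> R}) : R := - \sum_(u : U) plogp (margU p u).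

Definition HUV (p : {ffun U * V -> R}) : R := - \sum_(uv : U * V) plogp (p uv).

Definition HsU (p : {ffun U * V -> R}) (PU : {set {set U}}) : R :=
  - \sum_(A in PU) plogp (\sum_(u in A) margU p u).

Definition HsUV (p : {ffun U * V -> R}) (PU : {set {set U}}) (PV : {set {set V}}) : R :=
  - \sum_(A in PU) \sum_(B in PV) plogp (\sum_(u in A) \sum_(v in B) p (u, v)).

Definition condV (p : {ffun U * V -> R}) (B : {set V}) (u : U) : R :=
  (\sum_(v in B) p (u, v)) / margU p u.

Definition HsV_U (p : {ffun U * V -> R}) (PV : {set {set V}}) : R :=
  - \sum_(u : U | 0 < margU p u) \sum_(B in PV) margU p u * plogp (condV p B u).

End Entropy.

(* Main.v *)
Require Import Defs.
From mathcomp Require Import all_boot all_order all_algebra.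
From mathcomp Require Import all_classical all_reals exp.
From mathcomp Require Import ring lra.
Set Implicit Arguments. Unset Strict Implicit.
Import Order.TTheory GRing.Theory Num.Theory.
Local Open Scope ring_scope.

Definition LL (R : realType) (x : R) : R := x * ln x.

Lemma LL0 (R : realType) : LL (0 : R) = 0.
Proof. by rewrite /LL mul0r. Qed.

Lemma plogpE (R : realType) (x : R) : plogp x = LL x / ln 2.
Proof.
rewrite /plogp /LL /log2; case: eqP => [->|_]; first by rewrite !mul0r.
by rewrite mulrA.
Qed.

Lemma ln2_gt0 (R : realType) : 0 < ln (2 : R).
Proof. by apply: ln_gt0; rewrite ltr1n. Qed.

Lemma ln_le_sub1 (R : realType) (y : R) : 0 < y -> ln y <= y - 1.
Proof.
move=> y0; have h : -1 < y - 1 by lra.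
by have := le_ln1Dx h; rewrite addrCA subrr addr0.
Qed.

Lemma LL_superadd (R : realType) (a b : R) : 0 <= a -> 0 <= b ->
  LL a + LL b <= LL (a + b).
Proof.
rewrite /LL le_eqVlt => /predU1P [<-|a0]; first by rewrite mul0r !add0r.
rewrite le_eqVlt => /predU1P [<-|b0]; first by rewrite mul0r !addr0.
rewrite mulrDl; apply: lerD.
  by rewrite ler_pM2l // ler_ln ?posrE //; lra.
by rewrite ler_pM2l // ler_ln ?posrE //; lra.
Qed.

Lemma LL_sum (R : realType) (I : finType) (P : pred I) (g : I -> R) :
  (forall i, 0 <= g i) -> \sum_(i | P i) LL (g i) <= LL (\sum_(i | P i) g i).
Proof.
move=> g0.
suff [] : \sum_(i | P i) LL (g i) <= LL (\sum_(i | P i) g i) /\ 0 <= \sum_(i | P i) g i by [].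
apply: (big_ind2 (fun x y => x <= LL y /\ 0 <= y)).
- by rewrite LL0.
- move=> x1 x2 y1 y2 [h1 p1] [h2 p2]; split; last exact: addr_ge0.
  apply: le_trans (LL_superadd p1 p2); exact: lerD.
- by move=> i _; split.
Qed.

Lemma logsum_term (R : realType) (c m d q : R) : 0 <= c -> c <= m -> 0 < d -> 0 < q ->
  c * ln d - c * ln q + c - m * d / q <= LL c - c * ln m.
Proof.
rewrite /LL le_eqVlt => /predU1P [<-|c0] cm d0 q0.
  rewrite !mul0r !add0r.
  have : 0 <= m * d / q by apply: divr_ge0; [apply: mulr_ge0|]; lra.
  lra.
have m0 : 0 < m by lra.
have md0 : 0 < m * d by apply: mulr_gt0.
have cq0 : 0 < c * q by apply: mulr_gt0.
have := ln_le_sub1 (divr_gt0 md0 cq0).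
rewrite ln_div ?posrE // !lnM ?posrE // => h.
have := ler_wpM2l (ltW c0) h.
have -> : c * (m * d / (c * q) - 1) = m * d / q - c.
  have c0' : c != 0 by rewrite gt_eqF.
  have q0' : q != 0 by rewrite gt_eqF.
  by field; rewrite c0' q0'.
lra.
Qed.

Lemma logsum (R : realType) (I : finType) (P : pred I) (c m : I -> R) :
  (forall i, 0 <= c i) -> (forall i, c i <= m i) ->
  LL (\sum_(i | P i) c i) - (\sum_(i | P i) c i) * ln (\sum_(i | P i) m i)
  <= \sum_(i | P i) (LL (c i) - c i * ln (m i)).
Proof.
move=> c0 cm.
have d0 : 0 <= \sum_(i | P i) c i by apply: sumr_ge0.
have dq : \sum_(i | P i) c i <= \sum_(i | P i) m i by apply: ler_sum.
move: d0; rewrite le_eqVlt => /predU1P [d0|dpos].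
  rewrite -d0 LL0 mul0r subr0 big1 // => i Pi.
  rewrite (psumr_eq0P (fun i _ => c0 i) (esym d0) Pi).
  by rewrite LL0 mul0r subr0.
set d := \sum_(i | P i) c i in dpos dq *.
set q := \sum_(i | P i) m i in dq *.
have qpos : 0 < q by apply: lt_le_trans dq.
apply: le_trans (_ : \sum_(i | P i) (c i * ln d - c i * ln q + c i - m i * d / q) <= _).
  rewrite sumrB !big_split /= sumrN -!mulr_suml -/d -/q.
  have -> : q * d / q = d by field; rewrite gt_eqF.
  rewrite /LL; lra.
by apply: ler_sum => i _; apply: logsum_term.
Qed.

Lemma part_sum (R : realType) (T : finType) (P : {set {set T}}) (g : T -> R) :
  finset.partition P [set: T] -> \sum_x g x = \sum_(A in P) \sum_(x in A) g x.
Proof.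
move=> hP; rewrite -(finset.set_partition_big P hP); apply: eq_bigl => x; by rewrite finset.in_setT.
Qed.

Lemma fin_ineq1 (R : realType) (a1 a2 b K : R) : 0 < K -> b <= a1 + a2 ->
  -a1/K + -a2/K <= -b/K.
Proof.
move=> K0 h; rewrite -mulrDl ler_pM2r ?invr_gt0 //; lra.
Qed.

Lemma fin_ineq2 (R : realType) (a1 a2 b K : R) : 0 < K -> a1 + a2 <= b ->
  -b/K <= -a1/K + -a2/K.
Proof.
move=> K0 h; rewrite -mulrDl ler_pM2r ?invr_gt0 //; lra.
Qed.

Definition cc (R : realType) (U V : finType) (p : {ffun U * V -> R}) u (B : {set V}) :=
  \sum_(v in B) p (u, v).

Unset Implicit Arguments.

Theorem theorem1 (R : realType) (U V : finType) (p : {ffun U * V -> R})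
  (PU : {set {set U}}) (PV : {set {set V}}) :
  (forall uv, 0 <= p uv) -> \sum_(uv : U * V) p uv = 1 ->
  finset.partition PU [set: U] -> finset.partition PV [set: V] ->
  HsU p PU + HsV_U p PV <= HsUV p PU PV /\
  HsUV p PU PV <= HU p + HsV_U p PV /\
  HU p + HsV_U p PV <= HUV p.
Proof.
move=> p0 _ hPU hPV.
have K0 := ln2_gt0 R.
have hm u : \sum_(B in PV) cc p u B = margU p u.
  by rewrite /margU (part_sum (fun v => p (u, v)) hPV).
have c0 u B : 0 <= cc p u B by apply: sumr_ge0.
have cm u B : cc p u B <= margU p u.
  rewrite /margU (bigID (mem B)) /=.
  have -> : \sum_(i | true && (i \in B)) p (u, i) = cc p u B by apply: eq_bigl.
  have : 0 <= \sum_(i | true && (i \notin B)) p (u, i) by apply: sumr_ge0.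
  lra.
have m0 u : 0 <= margU p u by apply: sumr_ge0.
have EHU : HU p = - (\sum_u LL (margU p u)) / ln 2.
  by rewrite /HU; under eq_bigr do rewrite plogpE; rewrite -mulr_suml mulNr.
have EHUV : HUV p = - (\sum_uv LL (p uv)) / ln 2.
  by rewrite /HUV; under eq_bigr do rewrite plogpE; rewrite -mulr_suml mulNr.
have EHsU : HsU p PU = - (\sum_(A in PU) LL (\sum_(u in A) margU p u)) / ln 2.
  by rewrite /HsU; under eq_bigr do rewrite plogpE; rewrite -mulr_suml mulNr.
have EHsUV : HsUV p PU PV =
    - (\sum_(A in PU) \sum_(B in PV) LL (\sum_(u in A) cc p u B)) / ln 2.
  rewrite /HsUV mulNr mulr_suml; congr (- _); apply: eq_bigr => A _.
  by rewrite mulr_suml; apply: eq_bigr => B _; rewrite plogpE.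
have EHsV : HsV_U p PV =
    - (\sum_u \sum_(B in PV) (LL (cc p u B) - cc p u B * ln (margU p u))) / ln 2.
  rewrite /HsV_U mulNr mulr_suml; congr (- _).
  rewrite [RHS](bigID (fun u => 0 < margU p u)) /= [X in _ + X]big1 ?addr0.
    apply: eq_bigr => u mpos; rewrite mulr_suml; apply: eq_bigr => B _.
    rewrite /condV plogpE -/(cc p u B).
    move: (c0 u B); rewrite le_eqVlt => /predU1P [<-|cpos].
      by rewrite !(mul0r, LL0, subr0, mulr0).
    rewrite /LL ln_div ?posrE //.
    have : margU p u != 0 by rewrite gt_eqF.
    by move=> mn0; field; rewrite mn0 (gt_eqF K0).
  move=> u mneg.
  have mu0 : margU p u = 0 by apply/eqP; rewrite eq_le m0 andbT leNgt.
  rewrite big1 ?mul0r // => B _.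
  have cu0 : cc p u B = 0 by apply/eqP; rewrite eq_le c0 andbT -mu0 cm.
  by rewrite cu0 LL0 mul0r subr0.
set T := \sum_u \sum_(B in PV) LL (cc p u B).
set SE := \sum_u \sum_(B in PV) (LL (cc p u B) - cc p u B * ln (margU p u)).
have hSE : \sum_u LL (margU p u) + SE = T.
  rewrite /SE /T -big_split /=; apply: eq_bigr => u _.
  by rewrite sumrB -mulr_suml hm /LL addrC subrK.
rewrite EHU EHUV EHsU EHsUV EHsV; split; [|split].
- apply: fin_ineq1 => //.
  rewrite /SE (part_sum _ hPU) -big_split /=; apply: ler_sum => A _.
  rewrite [X in _ <= _ + X]exchange_big /=.
  set q := \sum_(u in A) margU p u.
  have hq : \sum_(B in PV) \sum_(u in A) cc p u B = q.
    by rewrite exchange_big /=; apply: eq_bigr => u _; rewrite hm.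
  have -> : LL q = \sum_(B in PV) (\sum_(u in A) cc p u B) * ln q.
    by rewrite -mulr_suml hq.
  rewrite -big_split /=; apply: ler_sum => B _.
  have := @logsum R U (mem A) (fun u => cc p u B) (margU p) (fun u => c0 u B) (fun u => cm u B).
  rewrite -/q /=; lra.
- apply: fin_ineq2 => //; rewrite hSE /T (part_sum _ hPU); apply: ler_sum => A _.
  rewrite (exchange_big _ _ _ (mem A)) /=; apply: ler_sum => B _.
  by apply: LL_sum.
- apply: fin_ineq1 => //; rewrite hSE /T.
  have -> : \sum_uv LL (p uv) = \sum_u \sum_v LL (p (u, v)).
    by rewrite pair_big; apply: eq_bigr => -[u v].
  apply: ler_sum => u _; rewrite (part_sum _ hPV); apply: ler_sum => B _.
  exact: LL_sum.
Qed.
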